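(* Let $n>2k$, $k\ge t+3$, and let $\mathcal F\subseteq\binom{[n]}{k}$ be a maximal $t$-intersecting family with $\tau_t(\mathcal F)=t+2$ and $\tau_t(\mathcal T_t(\mathcal F))=t+1$. Suppose there exist $U_0\in\mathcal U_t(\mathcal F)$ and $F_0\in\mathcal F$ with $|U_0\cap F_0|=t-1$ such that $\mathcal T_t(\mathcal F)\subseteq\binom{U_0\cup F_0}{t+2}$. Then at least one of the following holds: (i) $|\mathcal T_t(\mathcal F)|<\max\left\{(k-t)(k-t+1),\ (t+2)(k-t)+1,\ \binom{t+4}{2}\right\}$; (ii) there exist $M\in\binom{[n]}{k+2}$ and $W\in\binom{M}{t+2}$ such that $\mathcal T_t(\mathcal F)=\left\{T\in\binom{M}{t+2}: |T\cap W|\ge t+1\right\}$.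
   Context: A family is $t$-intersecting if any two members meet in at least $t$ elements. A $t$-cover of a family $\mathcal G$ of subsets of $[n]$ is a set $S\subseteq[n]$ with $|S\cap G|\ge t$ for all $G\in\mathcal G$; $\tau_t(\mathcal G)$ is the minimum size of a $t$-cover, and $\mathcal T_t(\mathcal G)$ is the set of all $t$-covers of $\mathcal G$ of size $\tau_t(\mathcal G)$. $\mathcal U_t(\mathcal F)=\mathcal T_t(\mathcal T_t(\mathcal F))$ is the family of all minimum-size $t$-covers of $\mathcal T_t(\mathcal F)$. A $t$-intersecting $\mathcal F\subseteq\binom{[n]}{k}$ is maximal if no $t$-intersecting subfamily of $\binom{[n]}{k}$ properly contains it. *)

(* Defs.v *)
From mathcomp Require Import all_boot.
Set Implicit Arguments. Unset Strict Implicit. Unset Printing Implicit Defensive.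

(* Ground set [n] is modelled by 'I_n; families are {set {set 'I_n}}. *)
Section Defs.
Variable n : nat.
Local Notation fam := {set {set 'I_n}}.

Definition ksets (X : {set 'I_n}) (k : nat) : fam :=
  [set A : {set 'I_n} | (A \subset X) && (#|A| == k)].

Definition t_intersecting (t : nat) (F : fam) : Prop :=
  forall A B, A \in F -> B \in F -> t <= #|A :&: B|.

Definition maximal_t_intersecting (t k : nat) (F : fam) : Prop :=
  [/\ F \subset ksets setT k, t_intersecting t F &
      forall G : fam, G \subset ksets setT k -> t_intersecting t G ->
        F \subset G -> G = F].

Definition is_tcover (t : nat) (G : fam) (S : {set 'I_n}) : bool :=
  [forall A in G, t <= #|S :&: A|].

(* tau_t(G): minimum size of a t-cover (n.+1 if no t-cover exists) *)
Definition tau (t : nat) (G : fam) : nat :=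
  \big[minn/n.+1]_(S : {set 'I_n} | is_tcover t G S) #|S|.

Definition Tt (t : nat) (G : fam) : fam :=
  [set S : {set 'I_n} | is_tcover t G S & #|S| == tau t G].

Definition Ut (t : nat) (F : fam) : fam := Tt t (Tt t F).
End Defs.

(* Main.v *)
Require Import Defs.
From mathcomp Require Import all_boot.
From mathcomp Require Import zify.
Set Implicit Arguments. Unset Strict Implicit. Unset Printing Implicit Defensive.

Lemma two_elems (T : finType) (X : {set T}) x :
  #|X| = 2 -> x \in X -> exists2 y, y != x & X = [set x; y].
Proof.
move=> h2 xX; have : #|X :\ x| == 1 by apply/eqP; have := cardsD1 x X; rewrite xX h2 /=; lia.
case/cards1P => y hy; exists y.
  apply/eqP => yx; have : y \in X :\ x by rewrite hy set11.
  by rewrite yx setD11.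
apply/setP => z; have := congr1 (fun A : {set T} => z \in A) hy; rewrite !inE /=.
by case: (z =P x) => [->|_] //=; rewrite xX.
Qed.

Lemma subset2_eq (T : finType) (X : {set T}) x y :
  #|X| = 2 -> x \in X -> y \in X -> x != y -> X = [set x; y].
Proof.
move=> h2 xX yX xy; apply/esym/eqP; rewrite eqEcard h2 cards2 xy andbT.
by apply/subsetP => z; rewrite !inE => /orP [] /eqP ->.
Qed.

Lemma ex_subset_card (T : finType) (A : {set T}) (j : nat) :
  j <= #|A| -> exists2 X : {set T}, X \subset A & #|X| = j.
Proof.
case/card_geqP => s [us ss sA]; exists [set x | x \in s].
  by apply/subsetP => x; rewrite inE => /sA.
by rewrite cardsE -ss; apply/card_uniqP.
Qed.

Lemma disj2 (T : finType) (a b c d : T) :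
  a != c -> a != d -> b != c -> b != d -> [set a; b] :&: [set c; d] = set0.
Proof.
move=> ac ad bc bd; apply/eqP; rewrite -subset0; apply/subsetP => x.
rewrite !inE => /andP [/orP [] /eqP -> /orP [] /eqP e];
  [move: ac|move: ad|move: bc|move: bd]; by rewrite e eqxx.
Qed.

Lemma cards3 (T : finType) (a b c : T) :
  a != b -> a != c -> b != c -> #|[set a; b; c]| = 3.
Proof.
move=> ab ac bc; rewrite setUC cardsU1 cards2 ab !inE negb_or.
by rewrite eq_sym ac eq_sym bc.
Qed.

Lemma bin2x2 n : 'C(n,2) * 2 = n * n.-1.
Proof.
elim: n => [//|n IH]; rewrite binS bin1 /= mulnDl IH.
case: n {IH} => [//|n] /=; lia.
Qed.

Definition bnd k t := maxn (maxn ((k - t) * (k - t + 1)) ((t + 2) * (k - t) + 1)) 'C(t + 4, 2).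

Lemma arithA k t : 1 <= t -> t + 3 <= k -> 3 * (k - t + 1) + 2 * t - 4 < bnd k t.
Proof.
move=> ht hk; rewrite /bnd; have := bin2x2 (t+4).
rewrite !leq_max ?ltn_max => hb.
have [->|t2] := eqVneq t 1.
  apply/orP; left; apply/orP; left. nia.
apply/orP; left; apply/orP; right. nia.
Qed.

Lemma arithB k t : 1 <= t -> t + 3 <= k -> (k - t + 1) + 3 * (t + 1) < bnd k t.
Proof.
move=> ht hk; rewrite /bnd; have := bin2x2 (t+4).
rewrite !leq_max => hb.
have [->|t2] := eqVneq t 1.
  apply/orP; left; apply/orP; left. nia.
have [ek|ek] := eqVneq k (t+3).
  apply/orP; right. subst k. have e: (t+4).-1 = t+3 by rewrite addnS. rewrite e in hb. nia.
apply/orP; left; apply/orP; right. nia.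
Qed.

Lemma arithC k t : t + 3 <= k -> (k - t + 1) + (t + 1) * (k - t + 1 - 1) <= bnd k t.
Proof.
move=> hk; rewrite /bnd !leq_max; apply/orP; left; apply/orP; right. nia.
Qed.

Lemma arA' k t c a b : c = k - t + 1 -> a <= c + b -> b <= 2 * (t + 1) + 2 * (c - 3) ->
  1 <= t -> t + 3 <= k -> a < bnd k t.
Proof. move=> -> h1 h2 ht hk; have := arithA ht hk; lia. Qed.
Lemma arB' k t c a b : c = k - t + 1 -> a <= c + b -> b <= 3 * (t + 1) ->
  1 <= t -> t + 3 <= k -> a < bnd k t.
Proof. move=> -> h1 h2 ht hk; have := arithB ht hk; lia. Qed.
Lemma arC' k t c r : c = k - t + 1 -> r <= c + (t + 1) * (c - 1) -> t + 3 <= k -> r <= bnd k t.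
Proof. move=> -> h1 hk; have := arithC hk; lia. Qed.


Lemma arith4 a b : a + a + b + b <= 2 * a + 2 * b.
Proof. lia. Qed.

Section Core.
Variables (n t k : nat) (U M : {set 'I_n}) (T : {set {set 'I_n}}).
Hypothesis Ht : 1 <= t.
Hypothesis Hk : t + 3 <= k.
Hypothesis HU : #|U| = t + 1.
Hypothesis HUM : U \subset M.
Hypothesis HM : #|M| = k + 2.
Hypothesis HT : forall S, S \in T -> [/\ S \subset M, #|S| = t + 2 & t <= #|S :&: U|].
Hypothesis Hint : forall S S', S \in T -> S' \in T -> t <= #|S :&: S'|.
Hypothesis Htau : forall B : {set 'I_n}, B \subset U -> #|B| = t -> exists2 S, S \in T & #|B :&: S| < t.

Let C := M :\: U.
Let T2 := [set S in T | #|S :&: U| == t].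

Lemma cardC : #|C| = k - t + 1.
Proof. by rewrite /C cardsDS // HM HU; lia. Qed.

Lemma T12 S : S \in T -> U \subset S \/ #|S :&: U| = t.
Proof.
move=> /HT [_ _ h]; have : #|S :&: U| <= #|U| by apply: subset_leq_card; apply: subsetIr.
rewrite HU => h2; have [e|ne] := eqVneq #|S :&: U| t; first by right.
left; have e : #|S :&: U| = #|U| by rewrite HU; lia.
have /eqP : S :&: U == U by rewrite eqEcard subsetIr e leqnn.
by move=> <-; apply: subsetIl.
Qed.

Lemma T1 S : S \in T -> U \subset S -> exists2 c, c \in C & S = c |: U.
Proof.
move=> ST US; have [SM cS _] := HT ST.
have h1 : #|S :\: U| == 1.
  by have := cardsID U S; rewrite cS (setIidPr US) HU => h; apply/eqP; lia.
case/cards1P: h1 => c hc; exists c.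
  have : c \in S :\: U by rewrite hc set11.
  by rewrite /C !inE => /andP [-> /(subsetP SM) ->].
by rewrite -(setID S U) (setIidPr US) hc setUC.
Qed.

Lemma T2P S : S \in T2 -> [/\ S \in T, #|S :&: U| = t, #|S :\: U| = 2, S :\: U \subset C &
   S = (S :&: U) :|: (S :\: U)].
Proof.
rewrite inE => /andP [ST /eqP e]; have [SM cS _] := HT ST; split => //.
- by have := cardsID U S; rewrite cS e; lia.
- by rewrite /C; apply: setSD.
- by rewrite setID.
Qed.

Lemma keyP S S' : S \in T2 -> S' \in T2 -> S :&: U != S' :&: U ->
  (S :\: U) :&: (S' :\: U) != set0.
Proof.
move=> /T2P [ST e _ _ _] /T2P [ST' e' _ _ _] ne.
have h := Hint ST ST'; have := cardsID U (S :&: S').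
have -> : S :&: S' :&: U = (S :&: U) :&: (S' :&: U) by rewrite setIACA setIid.
have -> : S :&: S' :\: U = (S :\: U) :&: (S' :\: U) by rewrite setDIl.
have : #|(S :&: U) :&: (S' :&: U)| < t.
  rewrite ltnNge; apply/negP => ht.
  have /eqP e1 : (S :&: U) :&: (S' :&: U) == S :&: U by rewrite eqEcard subsetIl e.
  have /eqP e2 : (S :&: U) :&: (S' :&: U) == S' :&: U by rewrite eqEcard subsetIr e'.
  have ee : S :&: U = S' :&: U by rewrite -[LHS]e1.
  by move: ne; rewrite ee eqxx.
rewrite -card_gt0; lia.
Qed.

Lemma tauP (B : {set 'I_n}) : B \subset U -> #|B| = t -> exists2 S, S \in T2 & S :&: U != B.
Proof.
move=> BU cB; have [S ST hS] := Htau BU cB; exists S.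
  rewrite inE ST /=; case: (T12 ST) => [US|->//].
  by move: hS; rewrite (setIidPl (subset_trans BU US)) cB ltnn.
apply/eqP => e; move: hS; rewrite -e.
by rewrite setIC setIA setIid (_ : #|S :&: U| = t) ?ltnn // e.
Qed.


Lemma cardT : #|T| <= #|C| + #|T2|.
Proof.
have sub : T \subset [set c |: U | c in C] :|: T2.
  apply/subsetP => S ST; rewrite inE; case: (T12 ST) => [US|e].
    by have [c cC ->] := T1 ST US; apply/orP; left; apply/imsetP; exists c.
  by rewrite orbC inE ST e eqxx.
apply: (leq_trans (subset_leq_card sub)); apply: (leq_trans (leq_card_setU _ _)).
by rewrite leq_add2r leq_imset_card.
Qed.

Let KU := [set B : {set 'I_n} | B \subset U & #|B| == t].

Lemma cardKU : #|KU| = t + 1.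
Proof. by rewrite cards_draws HU addn1 binSn. Qed.

Lemma onepair (p : {set 'I_n}) : #|[set S in T2 | S :\: U == p]| <= t + 1.
Proof.
have sub : [set S in T2 | S :\: U == p] \subset [set B :|: p | B in KU].
  apply/subsetP => S; rewrite inE => /andP [ST2 /eqP e].
  have [_ e1 _ _ eS] := T2P ST2; rewrite eS e; apply/imsetP; exists (S :&: U) => //.
  by rewrite inE subsetIr e1 eqxx.
by rewrite -cardKU; apply: (leq_trans (subset_leq_card sub)); apply: leq_imset_card.
Qed.

Lemma pairbound (p1 p2 : {set 'I_n}) : p1 :&: p2 = set0 ->
  #|[set S in T2 | (S :\: U == p1) || (S :\: U == p2)]| <= t + 1.
Proof.
move=> dis; set X := [set S in T2 | _].
case: (boolP [exists S in T2, S :\: U == p1]) => [/existsP [S1 /andP [S1T /eqP e1]] | no1];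
  last first.
  apply: leq_trans (onepair p2); apply: subset_leq_card; apply/subsetP => S; rewrite /X.
  rewrite inE => /andP [ST2 /orP [/eqP e|h]]; rewrite inE ST2 ?h //.
  by case/negP: no1; apply/existsP; exists S; rewrite ST2 e eqxx.
case: (boolP [exists S in T2, S :\: U == p2]) => [/existsP [S2 /andP [S2T /eqP e2]] | no2];
  last first.
  apply: leq_trans (onepair p1); apply: subset_leq_card; apply/subsetP => S; rewrite /X.
  rewrite inE => /andP [ST2 /orP [h|/eqP e]]; rewrite inE ST2 ?h //.
  by case/negP: no2; apply/existsP; exists S; rewrite ST2 e eqxx.
have eqU : forall S S', S \in T2 -> S' \in T2 -> S :\: U = p1 -> S' :\: U = p2 ->
   S :&: U = S' :&: U.
  move=> S S' ST S'T h h'; apply/eqP; apply/negPn/negP => ne.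
  by move: (keyP ST S'T ne); rewrite h h' dis eqxx.
set B := S1 :&: U.
have sub : X \subset [set B :|: p1; B :|: p2].
  apply/subsetP => S; rewrite /X inE => /andP [ST2 /orP [/eqP e|/eqP e]]; rewrite !inE;
  have [_ _ _ _ eS] := T2P ST2; rewrite eS e.
    by rewrite (eqU S S2) // -(eqU S1 S2) // eqxx.
  by rewrite /B (eqU S1 S) // eqxx orbT.
apply: (leq_trans (subset_leq_card sub)); rewrite cards2; lia.
Qed.


Lemma caseA S1 S2 : S1 \in T2 -> S2 \in T2 -> (S1 :\: U) :&: (S2 :\: U) = set0 ->
  #|T2| <= 2 * (t + 1) + 2 * (#|C| - 3).
Proof.
move=> hS1 hS2 dis.
have [_ eA1 c1 sC1 eS1] := T2P hS1; have [_ eA2 c2 sC2 eS2] := T2P hS2.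
set A := S1 :&: U.
have eA : S2 :&: U = A.
  apply/eqP; rewrite eq_sym; apply/negPn/negP => ne.
  by move: (keyP hS1 hS2 ne); rewrite dis eqxx.
have [S3 h3 ne3] := tauP (subsetIr S1 U) eA1.
have [_ eA3 c3 sC3 eS3] := T2P h3.
have m31 : (S3 :\: U) :&: (S1 :\: U) != set0 by apply: keyP.
have m32 : (S3 :\: U) :&: (S2 :\: U) != set0 by apply: keyP; rewrite // eA.
have dP : forall x y, x \in S1 :\: U -> y \in S2 :\: U -> x != y.
  move=> x y xP yP; apply/eqP => exy; have : x \in set0 by rewrite -dis inE xP exy yP.
  by rewrite inE.
case/set0Pn: m31 => g1; rewrite inE => /andP [g1P3 g1P1].
case/set0Pn: m32 => h1; rewrite inE => /andP [h1P3 h1P2].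
have [g2 g21 eP1] := two_elems c1 g1P1.
have [h2 h21 eP2] := two_elems c2 h1P2.
have g1h1 := dP _ _ g1P1 h1P2.
have eP3 := subset2_eq c3 g1P3 h1P3 g1h1.
have g2P1 : g2 \in S1 :\: U by rewrite eP1 !inE eqxx orbT.
have h2P2 : h2 \in S2 :\: U by rewrite eP2 !inE eqxx orbT.
have g1h2 := dP _ _ g1P1 h2P2; have g2h1 := dP _ _ g2P1 h1P2; have g2h2 := dP _ _ g2P1 h2P2.
set X1 := [set S in T2 | (S :\: U == [set g1; h1]) || (S :\: U == [set g2; h2])].
set X2 := [set S in T2 | (S :\: U == [set g1; h2]) || (S :\: U == [set g2; h1])].
set Y1 := [set A :|: [set g1; z] | z in C :\: [set g1; h1; h2]].
set Y2 := [set A :|: [set h1; z] | z in C :\: [set h1; g1; g2]].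
have cX1 : #|X1| <= t + 1.
  apply: pairbound; apply: disj2 => //; by rewrite eq_sym.
have cX2 : #|X2| <= t + 1.
  apply: pairbound; apply: disj2 => //; by rewrite eq_sym.
have inC x : x \in S1 :\: U -> x \in C by move/(subsetP sC1).
have inC2 x : x \in S2 :\: U -> x \in C by move/(subsetP sC2).
have cY1 : #|Y1| <= #|C| - 3.
  apply: leq_trans (leq_imset_card _ _) _.
  have ZC : [set g1; h1; h2] \subset C.
    by apply/subsetP => x; rewrite !in_setU !in_set1 => /orP [/orP [] | ] /eqP ->; [apply: inC | apply: inC2 | apply: inC2].
  by rewrite (cardsDS ZC) cards3 // eq_sym.
have cY2 : #|Y2| <= #|C| - 3.
  apply: leq_trans (leq_imset_card _ _) _.
  have ZC : [set h1; g1; g2] \subset C.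
    by apply/subsetP => x; rewrite !in_setU !in_set1 => /orP [/orP [] | ] /eqP ->; [apply: inC2 | apply: inC | apply: inC].
  by rewrite (cardsDS ZC) cards3 // eq_sym.
have sub : T2 \subset X1 :|: X2 :|: Y1 :|: Y2.
  apply/subsetP => S hS; have [_ eB cP sCP eS] := T2P hS.
  have inX1 : (S :\: U == [set g1; h1]) || (S :\: U == [set g2; h2]) ->
      S \in X1 :|: X2 :|: Y1 :|: Y2.
    by move=> h; rewrite !in_setU /X1 in_set hS h.
  have inX2 : (S :\: U == [set g1; h2]) || (S :\: U == [set g2; h1]) ->
      S \in X1 :|: X2 :|: Y1 :|: Y2.
    by move=> h; rewrite !in_setU /X2 in_set hS h orbT.
  have inY1 : forall z, z \in C :\: [set g1; h1; h2] -> S = A :|: [set g1; z] ->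
      S \in X1 :|: X2 :|: Y1 :|: Y2.
    by move=> z hz ->; rewrite !in_setU; apply/orP; left; apply/orP; right; apply/imsetP; exists z.
  have inY2 : forall z, z \in C :\: [set h1; g1; g2] -> S = A :|: [set h1; z] ->
      S \in X1 :|: X2 :|: Y1 :|: Y2.
    by move=> z hz ->; rewrite !in_setU; apply/orP; right; apply/imsetP; exists z.
  case: (eqVneq (S :&: U) A) => [eB' | nB].
  - have m : (S :\: U) :&: (S3 :\: U) != set0 by apply: keyP; rewrite // eB' eq_sym.
    case/set0Pn: m => w; rewrite inE => /andP [wP wP3].
    have [z zw eP] := two_elems cP wP.
    have zC : z \in C by apply: (subsetP sCP); rewrite eP !inE eqxx orbT.
    move: wP3; rewrite eP3 in_set2 => /orP [] /eqP ew; subst w.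
    + case: (eqVneq z h1) => [ez|zh1]; first by apply: inX1; rewrite eP ez eqxx.
      case: (eqVneq z h2) => [ez|zh2]; first by apply: inX2; rewrite eP ez eqxx.
      apply: (inY1 z); last by rewrite eS eB' eP.
      by rewrite in_setD zC !in_setU !in_set1 (negbTE zw) (negbTE zh1) (negbTE zh2).
    + case: (eqVneq z g1) => [ez|zg1].
        by apply: inX1; rewrite eP ez setUC eqxx.
      case: (eqVneq z g2) => [ez|zg2].
        by apply: inX2; rewrite eP ez setUC eqxx orbT.
      apply: (inY2 z); last by rewrite eS eB' eP.
      by rewrite in_setD zC !in_setU !in_set1 (negbTE zw) (negbTE zg1) (negbTE zg2).
  - have m1 : (S :\: U) :&: (S1 :\: U) != set0 by apply: keyP.
    have m2 : (S :\: U) :&: (S2 :\: U) != set0 by apply: keyP; rewrite // eA.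
    case/set0Pn: m1 => x; rewrite inE => /andP [xP xP1].
    case/set0Pn: m2 => y; rewrite inE => /andP [yP yP2].
    have eP := subset2_eq cP xP yP (dP _ _ xP1 yP2).
    move: xP1 yP2; rewrite eP1 eP2 !in_set2 => /orP [] /eqP ex /orP [] /eqP ey.
    + by apply: inX1; rewrite eP ex ey eqxx.
    + by apply: inX2; rewrite eP ex ey eqxx.
    + by apply: inX2; rewrite eP ex ey eqxx orbT.
    + by apply: inX1; rewrite eP ex ey eqxx orbT.
apply: leq_trans (subset_leq_card sub) _.
apply: leq_trans (leq_card_setU _ _) _.
apply: leq_trans (leq_add (leq_card_setU _ _) (leqnn _)) _.
apply: leq_trans (leq_add (leq_add (leq_card_setU _ _) (leqnn _)) (leqnn _)) _.
apply: leq_trans (leq_add (leq_add (leq_add cX1 cX2) cY1) cY2) _.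
exact: arith4.
Qed.


Lemma T2n0 : exists S, S \in T2.
Proof.
have tU : t <= #|U| by rewrite HU leq_addr.
have [B BU cB] := ex_subset_card tU.
by have [S hS _] := tauP BU cB; exists S.
Qed.

Lemma caseB2 : (forall S S', S \in T2 -> S' \in T2 -> (S :\: U) :&: (S' :\: U) != set0) ->
  ~~ [exists c0 in C, [forall S in T2, c0 \in S]] -> #|T2| <= 3 * (t + 1).
Proof.
move=> Hall noc.
have noc' : forall c, c \in C -> exists2 S, S \in T2 & c \notin S.
  move=> c cC; move/existsP: noc => noc.
  have : ~~ [forall S in T2, c \in S] by apply/negP => h; apply: noc; exists c; rewrite cC h.
  by case/forallPn => S; rewrite negb_imply => /andP [h1 h2]; exists S.
have [Sa ha] := T2n0; have [_ _ ca sCa eSa] := T2P ha.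
have : Sa :\: U != set0 by rewrite -card_gt0 ca.
case/set0Pn => x xPa; have [y yx ePa] := two_elems ca xPa.
have xC : x \in C by apply: (subsetP sCa).
have yC : y \in C by apply: (subsetP sCa); rewrite ePa !inE eqxx orbT.
have [Sb hb xSb] := noc' x xC; have [_ _ cb sCb eSb] := T2P hb.
have notin : forall (S : {set 'I_n}) w, w \notin S -> w \notin S :\: U.
  by move=> S w h; rewrite inE negb_and h orbT.
have yPb : y \in Sb :\: U.
  case/set0Pn: (Hall _ _ hb ha) => w; rewrite inE ePa in_set2 => /andP [wP /orP [] /eqP ew].
    by move: (notin _ _ xSb); rewrite -ew wP.
  by rewrite -ew.
have [z zy ePb] := two_elems cb yPb.
have zx : z != x.
  apply/eqP => e; move: (notin _ _ xSb); rewrite -e ePb !inE eqxx orbT //.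
have [Sc hc ySc] := noc' y yC; have [_ _ cc sCc eSc] := T2P hc.
have xPc : x \in Sc :\: U.
  case/set0Pn: (Hall _ _ hc ha) => w; rewrite inE ePa in_set2 => /andP [wP /orP [] /eqP ew].
    by rewrite -ew.
  by move: (notin _ _ ySc); rewrite -ew wP.
have zPc : z \in Sc :\: U.
  case/set0Pn: (Hall _ _ hc hb) => w; rewrite inE ePb in_set2 => /andP [wP /orP [] /eqP ew].
    by move: (notin _ _ ySc); rewrite -ew wP.
  by rewrite -ew.
have xz : x != z by rewrite eq_sym.
have ePc := subset2_eq cc xPc zPc xz.
set Z := [set x; y; z].
have PZ : forall S, S \in T2 -> S :\: U \subset Z.
  move=> S hS; have [_ _ cS sCS eS] := T2P hS.
  apply/subsetP => w wP; apply/negPn/negP => wZ.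
  have [v vw eP] := two_elems cS wP.
  have hv : forall Q : {set 'I_n}, Q \subset Z -> (S :\: U) :&: Q != set0 -> v \in Q.
    move=> Q QZ /set0Pn [u]; rewrite inE eP in_set2 => /andP [/orP [] /eqP -> uQ] //.
    by move: wZ; rewrite (subsetP QZ _ uQ).
  have QaZ : Sa :\: U \subset Z by rewrite ePa; apply/subsetP => u;
    rewrite !in_setU !in_set1 => /orP [] ->; rewrite ?orbT.
  have QbZ : Sb :\: U \subset Z by rewrite ePb; apply/subsetP => u;
    rewrite !in_setU !in_set1 => /orP [] ->; rewrite ?orbT.
  have QcZ : Sc :\: U \subset Z by rewrite ePc; apply/subsetP => u;
    rewrite !in_setU !in_set1 => /orP [] ->; rewrite ?orbT.
  have va := hv _ QaZ (Hall _ _ hS ha); have vb := hv _ QbZ (Hall _ _ hS hb).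
  have vc := hv _ QcZ (Hall _ _ hS hc).
  have nyx := negbTE yx; have nzx := negbTE zx; have nzy := negbTE zy.
  have nxy : (x == y) = false by rewrite eq_sym.
  have nxz : (x == z) = false by rewrite eq_sym.
  have nyz : (y == z) = false by rewrite eq_sym.
  move: va vb vc; rewrite ePa ePb ePc !in_set2.
  by case/orP => /eqP ->; rewrite ?nyx ?nzx ?nzy ?nxy ?nxz ?nyz.
set KZ := [set Q : {set 'I_n} | Q \subset Z & #|Q| == 2].
have sub : T2 \subset [set p.1 :|: p.2 | p in setX KU KZ].
  apply/subsetP => S hS; have [_ eS cS sCS eS'] := T2P hS.
  apply/imsetP; exists (S :&: U, S :\: U) => //.
  by rewrite in_setX !in_set subsetIr eS cS (PZ _ hS) !eqxx.
apply: leq_trans (subset_leq_card sub) _; apply: leq_trans (leq_imset_card _ _) _.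
rewrite cardsX cardKU /KZ cards_draws cards3 //; first by rewrite mulnC.
- by rewrite eq_sym.
- by rewrite eq_sym.
Qed.


Lemma T1g (S : {set 'I_n}) : S \subset M -> #|S| = t + 2 -> U \subset S -> exists2 c, c \in C & S = c |: U.
Proof.
move=> SM cS US.
have h1 : #|S :\: U| == 1.
  by have := cardsID U S; rewrite cS (setIidPr US) HU => h; apply/eqP; lia.
case/cards1P: h1 => c hc; exists c.
  have : c \in S :\: U by rewrite hc set11.
  by rewrite /C !inE => /andP [-> /(subsetP SM) ->].
by rewrite -(setID S U) (setIidPr US) hc setUC.
Qed.

Lemma caseB1 c0 : c0 \in C -> (forall S, S \in T2 -> c0 \in S) ->
  [/\ c0 |: U \in ksets M (t + 2),
      T \subset [set S in ksets M (t + 2) | t + 1 <= #|S :&: (c0 |: U)|] &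
      #|[set S in ksets M (t + 2) | t + 1 <= #|S :&: (c0 |: U)|]| <= #|C| + (t + 1) * (#|C| - 1)].
Proof.
move=> c0C Hc; set W := c0 |: U.
have c0U : c0 \notin U by move: c0C; rewrite /C in_setD => /andP [].
have c0M : c0 \in M by move: c0C; rewrite /C in_setD => /andP [].
have cW : #|W| = t + 2 by rewrite /W cardsU1 c0U HU; lia.
split.
- rewrite inE cW eqxx andbT; apply/subsetP => x; rewrite in_setU1 => /orP [/eqP ->//|].
  exact: (subsetP HUM).
- apply/subsetP => S ST; have [SM cS _] := HT ST; rewrite inE inE SM cS eqxx /=.
  case: (T12 ST) => [US|e].
    rewrite -HU; apply: subset_leq_card; apply/subsetP => x xU.
    by rewrite inE (subsetP US _ xU) in_setU1 xU orbT.
  have hS : S \in T2 by rewrite inE ST e eqxx.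
  have : #|c0 |: (S :&: U)| <= #|S :&: W|.
    apply: subset_leq_card; apply/subsetP => x; rewrite in_setU1 => /orP [/eqP ->|].
      by rewrite inE Hc // in_setU1 eqxx.
    by rewrite !inE => /andP [-> ->]; rewrite orbT.
  move=> h; apply: leq_trans h; by rewrite cardsU1 inE (negbTE c0U) andbF e addnC.
- set R := [set S in ksets M (t + 2) | t + 1 <= #|S :&: W|].
  set RR := [set c |: U | c in C] :|: [set p.1 :|: [set c0; p.2] | p in setX KU (C :\ c0)].
  have sub : R \subset RR.
    apply/subsetP => S; rewrite /R inE => /andP [].
    rewrite inE => /andP [SM /eqP cS] hW.
    case: (boolP (U \subset S)) => US.
      have [c cC ->] := T1g SM cS US; apply/setUP; left; apply/imsetP; exists c => //.
    have ltU : #|S :&: U| < t + 1.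
      rewrite ltn_neqAle -HU (subset_leq_card (subsetIr S U)) andbT.
      apply/negP => /eqP e; have /eqP eq : S :&: U == U by rewrite eqEcard subsetIr e leqnn.
      by move: US; rewrite -eq subsetIl.
    have c0S : c0 \in S.
      apply/negPn/negP => nS; have : #|S :&: W| <= #|S :&: U|.
        apply: subset_leq_card; apply/subsetP => x; rewrite !inE => /andP [xS /orP [/eqP ex|->]].
          by move: nS; rewrite -ex xS.
        by rewrite xS.
      lia.
    have eU : #|S :&: U| = t.
      have : #|S :&: W| <= #|c0 |: (S :&: U)|.
        apply: subset_leq_card; apply/subsetP => x; rewrite !inE => /andP [xS /orP [->//|xU]].
        by rewrite xS xU orbT.
      rewrite cardsU1 inE (negbTE c0U) andbF /= => h.
      apply/eqP; rewrite eqn_leq -ltnS -(addn1 t) ltU /=.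
      by rewrite -(leq_add2l 1) addnC; exact: leq_trans hW h.
    have cP : #|S :\: U| = 2 by have := cardsID U S; rewrite cS eU; lia.
    have c0P : c0 \in S :\: U by rewrite inE c0S c0U.
    have [x xc eP] := two_elems cP c0P.
    have xC : x \in C.
      have : x \in S :\: U by rewrite eP !inE eqxx orbT.
      by rewrite /C !inE => /andP [-> /(subsetP SM) ->].
    apply/setUP; right; apply/imsetP; exists (S :&: U, x).
      by rewrite in_setX inE subsetIr eU eqxx in_setD1 xc xC.
    by rewrite /= -eP setID.
  apply: leq_trans (subset_leq_card sub) _; apply: leq_trans (leq_card_setU _ _) _.
  apply: leq_add; first exact: leq_imset_card.
  apply: leq_trans (leq_imset_card _ _) _.
  by rewrite cardsX cardKU (cardsD1 c0 C) c0C add1n subn1.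
Qed.


Theorem coreT : #|T| < bnd k t \/ exists W, W \in ksets M (t + 2) /\
   T = [set S in ksets M (t + 2) | t + 1 <= #|S :&: W|].
Proof.
have cT := cardT; have cC := cardC.
case: (boolP [exists S1 in T2, exists S2 in T2, (S1 :\: U) :&: (S2 :\: U) == set0]).
  move/existsP => [S1 /andP [h1 /existsP [S2 /andP [h2 /eqP d]]]]; left.
  exact: arA' cC cT (caseA h1 h2 d) Ht Hk.
move=> nd.
have Hall : forall S S', S \in T2 -> S' \in T2 -> (S :\: U) :&: (S' :\: U) != set0.
  move=> S S' hS hS'; apply/negP => e; case/negP: nd; apply/existsP; exists S.
  by rewrite hS; apply/existsP; exists S'; rewrite hS' e.
case: (boolP [exists c0 in C, [forall S in T2, c0 \in S]]); last first.
  by move=> noc; left; exact: arB' cC cT (caseB2 Hall noc) Ht Hk.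
move/existsP => [c0 /andP [c0C /forallP hc]].
have Hc : forall S, S \in T2 -> c0 \in S by move=> S hS; move: (hc S); rewrite hS.
have [Wk sub cR] := caseB1 c0C Hc.
case: (ltnP #|T| (bnd k t)) => [lt|ge]; [by left|right].
exists (c0 |: U); split=> //; apply/eqP; rewrite eqEcard sub /=; apply: leq_trans ge.
exact: arC' cC cR Hk.
Qed.

End Core.


Lemma bigmin_le (I : finType) (P : pred I) (F : I -> nat) x i :
  P i -> \big[minn/x]_(j | P j) F j <= F i.
Proof.
move=> Pi. rewrite unlock /reducebig.
have : i \in index_enum I by rewrite mem_index_enum.
elim: (index_enum I) => //= j s IH; rewrite in_cons => /orP [/eqP <-|/IH h].
  by rewrite Pi geq_minl.
by case: (P j) => //; apply: leq_trans (geq_minr _ _) h.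
Qed.

Lemma tau_le n t (G : {set {set 'I_n}}) S : is_tcover t G S -> tau t G <= #|S|.
Proof. by move=> h; rewrite /tau; apply: bigmin_le. Qed.

Theorem lemma2p8 (n k t : nat) (F : {set {set 'I_n}}) :
  2 * k < n -> t + 3 <= k ->
  maximal_t_intersecting t k F ->
  tau t F = t + 2 ->
  tau t (Tt t F) = t + 1 ->
  (exists U0 F0, [/\ U0 \in Ut t F, F0 \in F, #|U0 :&: F0| + 1 = t &
                   Tt t F \subset ksets (U0 :|: F0) (t + 2)]) ->
  #|Tt t F| < maxn (maxn ((k - t) * (k - t + 1)) ((t + 2) * (k - t) + 1))
                   'C(t + 4, 2)
  \/ exists M W : {set 'I_n},
       [/\ #|M| = k + 2, W \in ksets M (t + 2) &
           Tt t F = [set T : {set 'I_n} in ksets M (t + 2) | t + 1 <= #|T :&: W|]].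
Proof.
move=> hn hk [Fk Fint Fmax] tauF tauT [U0 [F0 [U0U F0F cUF sub]]].
set T := Tt t F.
have ht : 1 <= t by lia.
move: U0U; rewrite /Ut inE => /andP [covU /eqP cU]; rewrite tauT in cU.
have cF0 : #|F0| = k by move: (subsetP Fk _ F0F); rewrite inE => /andP [_ /eqP].
set M := U0 :|: F0.
have cM : #|M| = k + 2 by rewrite /M cardsU cU cF0; lia.
have HT : forall S, S \in T -> [/\ S \subset M, #|S| = t + 2 & t <= #|S :&: U0|].
  move=> S ST; move: (subsetP sub _ ST); rewrite inE => /andP [SM /eqP cS]; split => //.
  by move/forallP: covU => /(_ S); rewrite ST setIC.
have HTF : forall S A, S \in T -> A \in F -> t <= #|S :&: A|.
  move=> S A; rewrite /T /Tt inE => /andP [/forallP h _] AF; by move: (h A); rewrite AF.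
have Hint : forall S S', S \in T -> S' \in T -> t <= #|S :&: S'|.
  move=> S S' ST S'T; have [_ cS _] := HT S ST; have [_ cS' _] := HT S' S'T.
  have cY : k - (t + 2) <= #|~: (S :|: S')|.
    have := cardsC (S :|: S'); rewrite card_ord.
    have := (leq_card_setU S S').1; rewrite cS cS' => h1 h2; lia.
  have [X XY cX] := ex_subset_card cY.
  set G := S :|: X.
  have XS : [disjoint S & X].
    rewrite -setI_eq0; apply/eqP/setP => x; rewrite !inE.
    by apply/negP => /andP [xS /(subsetP XY)]; rewrite !inE xS.
  have cG : #|G| = k.
    by rewrite /G cardsU (_ : S :&: X = set0) ?cards0 ?cS ?cX; [lia | apply/eqP; rewrite setI_eq0].
  have GF : G \in F.
    have e := Fmax (G |: F).
    have <- : G |: F = F.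
      apply: e; last exact: subsetUr.
        apply/subsetP => A; rewrite in_setU1 => /orP [/eqP ->|/(subsetP Fk)//].
        by rewrite inE subsetT cG eqxx.
      have GA : forall A, A \in F -> t <= #|G :&: A|.
        move=> A AF; apply: leq_trans (HTF S A ST AF) _; apply: subset_leq_card.
        by apply: setSI; apply: subsetUl.
      move=> A B; rewrite !in_setU1 => /orP [/eqP ->|AF] /orP [/eqP ->|BF].
      - by rewrite setIid cG; lia.
      - exact: GA.
      - by rewrite setIC; apply: GA.
      - exact: Fint.
    by rewrite setU11.
  have := HTF S' G S'T GF.
  have -> : S' :&: G = S' :&: S.
    rewrite /G setIUr; apply/setP => x; rewrite !inE.
    case xS': (x \in S') => //=; case: (x \in S) => //=.
    by apply/negbTE/negP => /(subsetP XY); rewrite !inE xS' orbT.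
  by rewrite setIC.
have Htau : forall B : {set 'I_n}, B \subset U0 -> #|B| = t ->
    exists2 S, S \in T & #|B :&: S| < t.
  move=> B BU cB; case: (boolP (is_tcover t T B)) => [cov|ncov].
    by have := tau_le cov; rewrite /T tauT cB; lia.
  by move/forallPn: ncov => [S]; rewrite negb_imply -ltnNge => /andP [ST lt]; exists S.
have := coreT ht hk cU (subsetUl U0 F0) cM HT Hint Htau.
case => [h|[W [Wk eW]]]; [left|right]; first by move: h; rewrite /bnd.
by exists M, W; split.
Qed.
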